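(* There exist an environment $E$ and a total preorder $\succeq$ on $\Pi^E$ such that $\succeq\in\mathrm{Ord}_{\mathrm{GOMORL}}(E)$ but $\succeq\notin\mathrm{Ord}_{\mathrm{FPR}}(E)$; that is, no function $J:\Pi^E\to\mathbb R$ satisfies $\pi_1\succeq\pi_2\iff J(\pi_1)\ge J(\pi_2)$. (Such an ordering can be obtained from a GOMORL specification with $k=2$ and $\succeq_J$ the lexicographic order on $\mathbb R^2$.)
   Context: An environment is a tuple $E=(\mathcal S,\mathcal A,\mathcal T,\mathcal I)$ where $\mathcal S,\mathcal A$ are finite nonempty sets, $\mathcal T:\mathcal S\times\mathcal A\to\Delta(\mathcal S)$ and $\mathcal I\in\Delta(\mathcal S)$. A policy is a map $\pi:\mathcal S\to\Delta(\mathcal A)$ (stationary, possibly stochastic); $\Pi^E$ denotes the set of all policies. A trajectory $\xi=(s_0,a_0,s_1,a_1,\dots)$ is generated under $\pi$ by $s_0\sim\mathcal I$, $a_t\sim\pi(s_t)$, $s_{t+1}\sim\mathcal T(s_t,a_t)$; $\mathbb E^\pi_\xi$ denotes expectation under this distribution. An objective-specification formalism $X$ assigns to each environment $E$ a set of objective specifications, each inducing a total preorder $\succeq$ on $\Pi^E$; $\mathrm{Ord}_X(E)$ is the set of total preorders so induced. A specification defining a scalar $J:\Pi^E\to\mathbb R$ induces $\pi_1\succeq\pi_2\iff J(\pi_1)\ge J(\pi_2)$. FPR: specification $(J)$ with $J:\Pi^E\to\mathbb R$ an arbitrary function. GOMORL: specification $(k,\mathcal R,\gamma,\succeq_J)$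 with $k\in\mathbb N$, $\mathcal R:\mathcal S\times\mathcal A\times\mathcal S\to\mathbb R^k$ with components $\mathcal R_i$, $\gamma\in[0,1)$, $\succeq_J$ a total preorder on $\mathbb R^k$; with $\vec J(\pi)=(J_1(\pi),\dots,J_k(\pi))$, $J_i(\pi)=\mathbb E^\pi_\xi[\sum_{t=0}^\infty\gamma^t\mathcal R_i(s_t,a_t,s_{t+1})]$, it induces $\pi_1\succeq\pi_2\iff\vec J(\pi_1)\succeq_J\vec J(\pi_2)$. The lexicographic order on $\mathbb R^2$ is $(x_1,x_2)\succeq(y_1,y_2)$ iff $x_1>y_1$, or $x_1=y_1$ and $x_2\ge y_2$. *)

(* Defs.v *)
From HB Require Import structures.
From mathcomp Require Import all_boot all_order all_algebra.
From mathcomp Require Import all_classical all_reals all_analysis.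
Set Implicit Arguments. Unset Strict Implicit. Unset Printing Implicit Defensive.
Import Order.TTheory GRing.Theory Num.Theory numFieldNormedType.Exports.
Local Open Scope ring_scope.

Definition is_dist (R : realType) (T : finType) (p : T -> R) : Prop :=
  (forall x, 0 <= p x) /\ \sum_(x : T) p x = 1.

Record env (R : realType) := Env {
  st : finType;
  act : finType;
  st_inhabited : st;
  act_inhabited : act;
  trans : st -> act -> st -> R;
  init : st -> R;
  trans_dist : forall s a, is_dist (trans s a);
  init_dist : is_dist init }.
Arguments trans {R} e _ _ _.
Arguments init {R} e _.

Definition policy (R : realType) (E : env R) :=
  { pi : st E -> act E -> R | forall s, is_dist (pi s) }.

Definition polf (R : realType) (E : env R) (pi : policy E) : st E -> act E -> R :=
  proj1_sig pi.

Definition prefix_prob (R : realType) (E : env R) (pi : policy E) (n : nat)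
  (ss : {ffun 'I_n.+1 -> st E}) (aa : {ffun 'I_n -> act E}) : R :=
  init E (ss ord0) *
  \prod_(t < n) (polf pi (ss (inord t)) (aa t) *
                 trans E (ss (inord t)) (aa t) (ss (inord t.+1))).

Definition trunc_return (R : realType) (E : env R) (pi : policy E)
  (r : st E -> act E -> st E -> R) (gamma : R) (n : nat) : R :=
  \sum_(ss : {ffun 'I_n.+1 -> st E}) \sum_(aa : {ffun 'I_n -> act E})
    prefix_prob pi ss aa *
    \sum_(t < n) gamma ^+ t * r (ss (inord t)) (aa t) (ss (inord t.+1)).

(* J(pi) = E^pi[ sum_{t>=0} gamma^t r(...) ], the limit of the truncated
   expected returns (equal to the expectation of the infinite sum by
   dominated convergence, as rewards are bounded and gamma < 1). *)
Definition disc_return (R : realType) (E : env R) (pi : policy E)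
  (r : st E -> act E -> st E -> R) (gamma : R) : R :=
  limn (trunc_return pi r gamma).

Definition total_preorder (T : Type) (le : T -> T -> Prop) : Prop :=
  (forall x y z, le x y -> le y z -> le x z) /\ (forall x y, le x y \/ le y x).

Definition in_Ord_FPR (R : realType) (E : env R)
  (ord : policy E -> policy E -> Prop) : Prop :=
  exists J : policy E -> R, forall p1 p2, ord p1 p2 <-> J p2 <= J p1.

Definition in_Ord_GOMORL (R : realType) (E : env R)
  (ord : policy E -> policy E -> Prop) : Prop :=
  exists (k : nat) (rw : st E -> act E -> st E -> 'I_k -> R) (gamma : R)
         (ordJ : ('I_k -> R) -> ('I_k -> R) -> Prop),
    0 <= gamma /\ gamma < 1 /\ total_preorder ordJ /\
    forall p1 p2, ord p1 p2 <->
      ordJ (fun i => disc_return p1 (fun s a s' => rw s a s' i) gamma)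
           (fun i => disc_return p2 (fun s a s' => rw s a s' i) gamma).

(* Main.v *)
Require Import Defs.
From mathcomp Require Import all_boot all_order all_algebra.
From mathcomp Require Import all_classical all_reals all_analysis.
Set Implicit Arguments. Unset Strict Implicit. Unset Printing Implicit Defensive.
From mathcomp Require Import lra.
Import Order.TTheory GRing.Theory Num.Theory numFieldNormedType.Exports.
Local Open Scope ring_scope.

Section S.
Variable R : realType.

Lemma dist1 : is_dist (fun _ : unit => (1:R)).
Proof. split => // ; rewrite big_const card_unit /=. by rewrite addr0. Qed.

Definition E0 : env R :=
  @Env R unit 'I_3 tt ord0 (fun _ _ _ => 1) (fun _ => 1)
    (fun _ _ => dist1) dist1.

Lemma ret_eq (pi : policy E0) (r : unit -> 'I_3 -> unit -> R) :
  disc_return pi r 0 = \sum_(a : 'I_3) polf pi tt a * r tt a tt.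
Proof.
suff H : forall n, trunc_return pi r 0 n.+1 = \sum_(a : 'I_3) polf pi tt a * r tt a tt.
  rewrite /disc_return.
  apply: lim_near_cst => //.
  near=> n.
  have hn : (0 < n)%N by near: n; exists 1%N.
  by rewrite -(prednK hn) H.
move=> n; rewrite /trunc_return.
set F := fun (t : 'I_n.+1) (a : 'I_3) => polf pi tt a * (if (t : nat) == 0%N then r tt a tt else 1).
have H1 : forall (ss : {ffun 'I_n.+2 -> st E0}) (aa : {ffun 'I_n.+1 -> act E0}),
   prefix_prob pi ss aa *
   \sum_(t < n.+1) 0 ^+ t * r (ss (inord t)) (aa t) (ss (inord t.+1))
   = \prod_t F t (aa t).
  move=> ss aa.
  have Hs : forall i, ss i = tt by move=> i; case: (ss i).
  rewrite /prefix_prob /= mul1r.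
  have -> : \prod_(t < n.+1) (polf pi (ss (inord t)) (aa t) * trans E0 (ss (inord t)) (aa t) (ss (inord t.+1))) = \prod_(t < n.+1) polf pi tt (aa t).
    by apply: eq_bigr => i _; rewrite Hs /= mulr1.
  have -> : \sum_(t < n.+1) 0 ^+ t * r (ss (inord t)) (aa t) (ss (inord t.+1)) = \sum_(t < n.+1) 0 ^+ t * r tt (aa t) tt.
    by apply: eq_bigr => i _; rewrite !Hs.
  have -> : \sum_(t < n.+1) 0 ^+ t * r tt (aa t) tt = r tt (aa ord0) tt.
    rewrite big_ord_recl expr0 mul1r big1 ?addr0 //.
    by move=> i _; rewrite lift0 /= exprS !mul0r.
  rewrite /F big_ord_recl [in RHS]big_ord_recl /=.
  under [in RHS]eq_bigr do rewrite mulr1.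
  by rewrite mulrAC.
under eq_bigr do under eq_bigr do rewrite H1.
rewrite -bigA_distr_bigA sumr_const card_ffun /= card_unit exp1n mulr1n.
rewrite big_ord_recl [\prod_(i < n) _]big1 ?mulr1.
  by apply: eq_bigr.
move=> i _; rewrite /F lift0 /=.
under eq_bigr do rewrite mulr1.
by case: (proj2_sig pi tt).
Unshelve. all: by end_near.
Qed.

Definition rw (s : unit) (a : 'I_3) (s' : unit) (i : 'I_2) : R := ((a : nat) == (i : nat))%:R.

Definition lex (u w : 'I_2 -> R) : Prop :=
  w ord0 < u ord0 \/ (u ord0 = w ord0 /\ w ord_max <= u ord_max).

Lemma lex_tp : total_preorder lex.
Proof.
split.
  move=> x y z [h1|[h1 h2]] [h3|[h3 h4]]; rewrite /lex.
  - by left; apply: lt_trans h3 h1.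
  - by left; rewrite -h3.
  - by left; rewrite h1.
  - by right; split; [rewrite h1 h3 | apply: le_trans h4 h2].
move=> x y; rewrite /lex.
case: (ltgtP (x ord0) (y ord0)) => h.
- by right; left.
- by left; left.
- case: (lerP (y ord_max) (x ord_max)) => h2.
    by left; right.
  by right; right; split => //; apply: ltW.
Qed.

Definition pdef : 'I_3 -> R := fun a => ((a : nat) == 0%N)%:R.

Lemma pdef_dist : is_dist pdef.
Proof.
split; first by move=> a; rewrite /pdef ler0n.
by rewrite !big_ord_recl big_ord0 /pdef /=; rewrite !addr0.
Qed.

Definition mkpol (p : 'I_3 -> R) : policy E0 :=
  match pselect (is_dist p) with
  | left h => exist (fun pi : st E0 -> act E0 -> R => forall s, is_dist (pi s)) (fun _ => p) (fun _ => h)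
  | right _ => exist (fun pi : st E0 -> act E0 -> R => forall s, is_dist (pi s)) (fun _ => pdef) (fun _ => pdef_dist)
  end.

Lemma mkpolE p : is_dist p -> polf (mkpol p) tt = p.
Proof. by move=> h; rewrite /mkpol; case: pselect. Qed.

Definition pv (x y : R) : 'I_3 -> R :=
  fun a => if (a : nat) == 0%N then x else if (a : nat) == 1%N then y else 1 - x - y.

Lemma pv_dist x y : 0 <= x -> 0 <= y -> x + y <= 1 -> is_dist (pv x y).
Proof.
move=> hx hy hxy; split.
  move=> a; rewrite /pv; case: ifP => // _; case: ifP => // _.
  lra.
rewrite !big_ord_recl big_ord0 /pv /=.
lra.
Qed.

Definition V (pi : policy E0) : 'I_2 -> R :=
  fun i => disc_return pi (fun s a s' => rw s a s' i) 0.

Lemma V_pv x y : 0 <= x -> 0 <= y -> x + y <= 1 ->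
  V (mkpol (pv x y)) ord0 = x /\ V (mkpol (pv x y)) ord_max = y.
Proof.
move=> hx hy hxy; have hd := pv_dist hx hy hxy; rewrite /V !ret_eq mkpolE //.
rewrite !big_ord_recl !big_ord0 /pv /rw /=.
split; lra.
Qed.

End S.

Theorem mainTheorem17 (R : realType) :
  exists (E : env R) (ord : policy E -> policy E -> Prop),
    total_preorder ord /\ in_Ord_GOMORL ord /\ ~ in_Ord_FPR ord.
Proof.
exists (E0 R), (fun p1 p2 => lex (V p1) (V p2)).
split.
  have [h1 h2] := @lex_tp R.
  by split; [move=> x y z; apply: h1 | move=> x y; apply: h2].
split.
  exists 2%N, (@rw R), 0, (@lex R).
  by split => //; split => //; split; [exact: lex_tp|].
move=> [J HJ].
pose A (x : R) := mkpol (pv x 0).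
pose B (x : R) := mkpol (pv x (1/2)).
pose D : set R := `[0, 1/2]%classic.
have VA x : D x -> V (A x) ord0 = x /\ V (A x) ord_max = 0.
  rewrite /D /= in_itv /= => /andP [h1 h2]; apply: V_pv => //; lra.
have VB x : D x -> V (B x) ord0 = x /\ V (B x) ord_max = 1/2.
  rewrite /D /= in_itv /= => /andP [h1 h2]; apply: V_pv => //; lra.
have key1 x : D x -> J (A x) < J (B x).
  move=> Dx; have [a0 a1] := VA x Dx; have [b0 b1] := VB x Dx.
  rewrite ltNge; apply/negP => /(proj2 (HJ _ _)).
  rewrite /lex a0 a1 b0 b1 => -[|[_]]; [rewrite ltxx | ]; lra.
have key2 x y : D x -> D y -> x < y -> J (B x) < J (A y).
  move=> Dx Dy xy; have [a0 a1] := VA y Dy; have [b0 b1] := VB x Dx.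
  rewrite ltNge; apply/negP => /(proj2 (HJ _ _)).
  rewrite /lex a0 a1 b0 b1 => -[|[]]; lra.
pose Bs x : set R := if J (A x) < J (B x) then `]J (A x), J (B x)[%classic else setT.
have cD : countable D.
  apply: (@separated_open_countable R R Bs).
  - by move=> i; rewrite /Bs; case: ifP => _; [exact: itv_open | exact: openT].
  - move=> i; rewrite /Bs; case: ifP => h; last by exists 0.
    exists ((J (A i) + J (B i)) / 2); rewrite /= in_itv /=; apply/andP; split; lra.
  - move=> i j Di Dj [z [Hi Hj]].
    move: Hi Hj; rewrite /Bs (key1 _ Di) (key1 _ Dj) /= !in_itv /=.
    move=> /andP [h1 h2] /andP [h3 h4].
    case: (ltgtP i j) => // h.
    + by have := key2 _ _ Di Dj h; lra.
    + by have := key2 _ _ Dj Di h; lra.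
have := countable_lebesgue_measure0 cD.
rewrite /D lebesgue_measure_itv /= lte_fin.
have h2 : (0:R) < 1/2 by lra.
rewrite h2 oppr0 adde0 => -[]; lra.
Qed.
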